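(* Let $H$ be a hypergraph and $K$ a field, and let $f_{\mathcal E}\in I_H$ be the binomial arising from a balanced edge set $\mathcal E$ with $\operatorname{supp}(\mathcal E)\subseteq E(H)$ and $n=|\mathcal E_{blue}|\ge|\mathcal E_{red}|$. Then $f_{\mathcal E}$ is a linear combination, with coefficients in $K[t_e : e\in E(H)]$, of binomials in $I_H$ of degree less than $n$, provided one of the following two conditions holds: (i) there exists a proper splitting set $S$ of $\mathcal E$ with decomposition $(\Gamma_1,S,\Gamma_2)$ (with respect to which $S$ is proper) such that $|\Gamma_{i,blue}|<n$ and $|\Gamma_{i,red}|<n$ for $i=1,2$; or (ii) there is a blue splitting set $S$ of $\mathcal E$ with decomposition $(\Gamma_1,S,\Gamma_2)$ and a red splitting set $R$ of $\mathcal E$ with decomposition $(\Upsilon_1,R,\Upsilon_2)$, both of size less than $n$, such that $|\Gamma_{1,blue}|<n$, $|\Upsilon_{2,red}|<n$, $|\Gamma_{2,blue}|\le n$, $|\Upsilon_{1,red}|\le n$, and $S\cap R\neq\emptyset$.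
   Context: A hypergraph $H$ has vertex set $V=\{1,\dots,m\}$ and a set $E(H)$ of edges, each a nonempty subset of $V$ (no repeated edges); edges may have different sizes. The toric ideal $I_H$ is the kernel of $\phi_H: K[t_e : e\in E(H)]\to K[x_1,\dots,x_m]$, $t_e\mapsto\prod_{j\in e}x_j$. The degree of a binomial $u-v$ is the larger of the degrees of its monomials $u$, $v$. Multisets of edges: $|M|$ is the size with multiplicity; $\operatorname{supp}(M)$ the set of distinct elements; $\sqcup$ adds multiplicities; $\cap$ takes minimum multiplicities; $\subseteq$ is multiplicity-wise containment, and a proper submultiset is a contained, unequal one. A balanced edge set $\mathcal E$ is a pair of finite multisets $\mathcal E_{blue},\mathcal E_{red}$ of edges such that every vertex lies in the same number of blue as red edges, counted with multiplicity; $\operatorname{supp}(\mathcal E)=\operatorname{supp}(\mathcal E_{blue}\sqcup\mathcal E_{red})$; $f_{\mathcal E}=\prod_{e\in\mathcal E_{blue}}t_e-\prod_{e\in\mathcal E_{red}}t_e$ (with multiplicity). A balanced edge set $\mathcal F$ is reducible with separator $S$ and decomposition $(\Gamma_1,S,\Gamma_2)$ if $S$ is a nonempty multiset with $\operatorname{supp}(S)\subseteq\operatorname{supp}(\mathcal F)$ and there are balanced edge sets $\Gamma_1\neq\mathcal F$, $\Gamma_2\neq\mathcal F$ with $S=\Gamma_{1,red}\cap\Gamma_{2,blue}$, $\mathcal F_{blue}\sqcup\mathcal F_{red}=\Gamma_{1,blue}\sqcup\Gamma_{1,red}\sqcup\Gamma_{2,blue}\sqcup\Gamma_{2,red}$,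 $\Gamma_{1,red},\Gamma_{2,red}\subseteq\mathcal F_{red}$ and $\Gamma_{1,blue},\Gamma_{2,blue}\subseteq\mathcal F_{blue}$. $S$ is proper with respect to $(\Gamma_1,S,\Gamma_2)$ if $S$ is a proper submultiset of both $\Gamma_{1,red}$ and $\Gamma_{2,blue}$; if not proper, it is blue with respect to the decomposition if $\Gamma_{1,red}=S$ and red if $\Gamma_{2,blue}=S$. For a multiset $S$ of edges, $\mathcal E+S$ has blue part $\mathcal E_{blue}\sqcup S$ and red part $\mathcal E_{red}\sqcup S$. A nonempty multiset $S$ with $\operatorname{supp}(S)\subseteq E(H)$ is a splitting set of $\mathcal E$ with decomposition $(\Gamma_1,S,\Gamma_2)$ if $\mathcal E+S$ is reducible with separator $S$ and that decomposition; it is a blue (resp. red) splitting set with respect to the decomposition if $S$ is a blue (resp. red) separator of $\mathcal E+S$ with respect to it; it is proper if there is a decomposition with respect to which $S$ is a proper separator. *)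

(* Defs.v *)
From HB Require Import structures.
From mathcomp Require Import all_boot all_order all_algebra.
From mathcomp Require Import mpoly.
Set Implicit Arguments. Unset Strict Implicit. Unset Printing Implicit Defensive.
Import GRing.Theory.
Local Open Scope ring_scope.

(* A hypergraph on vertex set 'I_m (= {1,...,m} relabelled) is given by its
   edge set EH : {set {set 'I_m}} (edges nonempty, stated in the theorem).
   [edge EH] is the finite type of edges e \in EH. *)
Definition edge (m : nat) (EH : {set {set 'I_m}}) := {e : {set 'I_m} | e \in EH}.
HB.instance Definition _ m EH := Finite.on (@edge m EH).

Definition nE (m : nat) (EH : {set {set 'I_m}}) := #|{: edge EH}|.

(* Finite multisets of edges: multiplicity functions. *)
Definition mset (m : nat) (EH : {set {set 'I_m}}) := {ffun edge EH -> nat}.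

Section MS.
Variables (m : nat) (EH : {set {set 'I_m}}).
Implicit Types A B : mset EH.
Definition mcard A : nat := (\sum_e A e)%N.
Definition munion A B : mset EH := [ffun e => (A e + B e)%N].
Definition mcap A B : mset EH := [ffun e => minn (A e) (B e)].
Definition msub A B : bool := [forall e, (A e <= B e)%N].
Definition mproper A B : bool := msub A B && (A != B).
Definition mempty A : bool := [forall e, A e == 0%N].
Definition msupp_sub A B : bool := [forall e, (A e != 0%N) ==> (B e != 0%N)].
End MS.

(* A balanced edge set: pair (blue, red) of multisets of edges such that every
   vertex lies in the same number of blue as red edges (with multiplicity). *)
Record bes (m : nat) (EH : {set {set 'I_m}}) := Bes { blue : mset EH ; red : mset EH }.

Section Balanced.
Variables (m : nat) (EH : {set {set 'I_m}}).
Definition balanced (F : bes EH) : Prop :=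
  forall j : 'I_m,
    (\sum_(e : edge EH | j \in val e) blue F e)%N =
    (\sum_(e : edge EH | j \in val e) red F e)%N.

(* supp(F) = supp(F_blue ⊔ F_red) *)
Definition bes_all (F : bes EH) : mset EH := munion (blue F) (red F).

Definition reducible (F : bes EH) (G1 : bes EH) (S : mset EH) (G2 : bes EH) : Prop :=
  [/\ ~~ mempty S, msupp_sub S (bes_all F),
      balanced G1 /\ balanced G2, G1 <> F /\ G2 <> F
    & [/\ S = mcap (red G1) (blue G2),
      bes_all F = munion (munion (munion (blue G1) (red G1)) (blue G2)) (red G2),
      msub (red G1) (red F) /\ msub (red G2) (red F)
    & msub (blue G1) (blue F) /\ msub (blue G2) (blue F)]].

Definition proper_sep (G1 : bes EH) (S : mset EH) (G2 : bes EH) : bool :=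
  mproper S (red G1) && mproper S (blue G2).
(* blue / red separator (only when not proper; G1_red = S already excludes
   properness, and likewise G2_blue = S) *)
Definition blue_sep (G1 : bes EH) (S : mset EH) (G2 : bes EH) : Prop :=
  ~~ proper_sep G1 S G2 /\ red G1 = S.
Definition red_sep (G1 : bes EH) (S : mset EH) (G2 : bes EH) : Prop :=
  ~~ proper_sep G1 S G2 /\ blue G2 = S.

Definition bes_addS (E : bes EH) (S : mset EH) : bes EH :=
  Bes (munion (blue E) S) (munion (red E) S).

Definition splitting (E : bes EH) (G1 : bes EH) (S : mset EH) (G2 : bes EH) : Prop :=
  ~~ mempty S /\ reducible (bes_addS E S) G1 S G2.
End Balanced.

Section Toric.
Variables (K : fieldType) (m : nat) (EH : {set {set 'I_m}}).

Definition tvar (e : edge EH) : {mpoly K[nE EH]} := 'X_(enum_rank e).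
Definition tmono (M : mset EH) : {mpoly K[nE EH]} := \prod_e tvar e ^+ M e.
Definition fbin (E : bes EH) : {mpoly K[nE EH]} := tmono (blue E) - tmono (red E).

(* phi_H : t_e |-> prod_{j in e} x_j *)
Definition phiH (p : {mpoly K[nE EH]}) : {mpoly K[m]} :=
  comp_mpoly [tuple (\prod_(j in val (enum_val i)) 'X_j : {mpoly K[m]}) | i < nE EH] p.
Definition in_IH (p : {mpoly K[nE EH]}) : Prop := phiH p = 0.

Definition binomial_IH_lt (n : nat) (b : {mpoly K[nE EH]}) : Prop :=
  exists u v : 'X_{1.. nE EH},
    [/\ b = 'X_[u] - 'X_[v], in_IH b & (maxn (mdeg u) (mdeg v) < n)%N].

Definition lincomb_lowdeg (n : nat) (p : {mpoly K[nE EH]}) : Prop :=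
  exists (k : nat) (c b : 'I_k -> {mpoly K[nE EH]}),
    (forall i, binomial_IH_lt n (b i)) /\ p = \sum_(i < k) c i * b i.
End Toric.

(* Main.v *)
Require Import Defs.
From HB Require Import structures.
From mathcomp Require Import all_boot all_order all_algebra.
From mathcomp Require Import mpoly.
From mathcomp Require Import zify.
Set Implicit Arguments. Unset Strict Implicit. Unset Printing Implicit Defensive.
Import GRing.Theory.



Section Comb.
Variables (m : nat) (EH : {set {set 'I_m}}).
Local Notation ms := (mset EH).

Definition dg (M : ms) (j : 'I_m) : nat := (\sum_(e : edge EH | j \in val e) M e)%N.

Lemma dgD (A B : ms) j : dg (munion A B) j = dg A j + dg B j.
Proof. by rewrite /dg -big_split; apply: eq_bigr => e _; rewrite ffunE. Qed.

Lemma mcardD (A B : ms) : mcard (munion A B) = mcard A + mcard B.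
Proof. by rewrite /mcard -big_split; apply: eq_bigr => e _; rewrite ffunE. Qed.

Lemma mcard_le (A B : ms) : (forall e, A e <= B e) -> mcard A <= mcard B.
Proof. by move=> H; apply: leq_sum => e _. Qed.

Lemma mcard_gt0 (A : ms) : ~~ mempty A -> 0 < mcard A.
Proof.
move=> /forallPn [e He]; rewrite /mcard (bigD1 e) //=; lia.
Qed.

Lemma msubP (A B : ms) : msub A B -> forall e, A e <= B e.
Proof. by move=> /forallP. Qed.

Lemma msE (A B : ms) : (forall e, A e = B e) -> A = B.
Proof. by move=> H; apply/ffunP. Qed.

Section Dec.
Variables (E G1 G2 : bes EH) (S : ms).
Hypothesis HE : balanced E.
Hypothesis Hred : reducible (bes_addS E S) G1 S G2.

Definition Xs e := blue G1 e + blue G2 e.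
Definition Fb e := blue E e + S e.
Definition dDp : ms := [ffun e => Xs e - Fb e].
Definition dDn : ms := [ffun e => Fb e - Xs e].
Definition dM : ms := [ffun e => blue E e - dDn e].
Definition dN : ms := [ffun e => red E e - dDp e].
Definition dA : ms := [ffun e => red G1 e - S e].
Definition dB : ms := [ffun e => blue G2 e - S e].

Lemma pfacts e :
  [/\ S e = minn (red G1 e) (blue G2 e),
      blue E e + S e + (red E e + S e) =
        blue G1 e + red G1 e + blue G2 e + red G2 e,
      red G1 e <= red E e + S e /\ red G2 e <= red E e + S e
    & blue G1 e <= blue E e + S e /\ blue G2 e <= blue E e + S e].
Proof.
case: Hred => _ _ _ _ [HS Hall [HR1 HR2] [HB1 HB2]].
split.
- by rewrite HS ffunE.
- have := congr1 (fun f : ms => f e) Hall.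
  by rewrite /bes_all /= !ffunE.
- by split; [have := msubP HR1 e | have := msubP HR2 e]; rewrite /= ffunE.
- by split; [have := msubP HB1 e | have := msubP HB2 e]; rewrite /= ffunE.
Qed.

Ltac pf e := case: (pfacts e) => ? ? [? ?] [? ?]; rewrite /Xs /Fb; lia.

Lemma dec1 : blue E = munion dM dDn.
Proof. apply: msE => e; rewrite !ffunE; pf e. Qed.
Lemma dec2 : munion dM dDp = munion dB (blue G1).
Proof. apply: msE => e; rewrite !ffunE; pf e. Qed.
Lemma dec3 : munion dB (red G1) = munion dA (blue G2).
Proof. apply: msE => e; rewrite !ffunE; pf e. Qed.
Lemma dec4 : munion dA (red G2) = munion dN dDn.
Proof. apply: msE => e; rewrite !ffunE; pf e. Qed.
Lemma dec5 : munion dN dDp = red E.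
Proof. apply: msE => e; rewrite !ffunE; pf e. Qed.
Lemma decb e : [/\ dDp e <= blue G1 e, dDp e <= blue G2 e,
                   dDn e <= red G1 e & dDn e <= red G2 e].
Proof. rewrite !ffunE; split; pf e. Qed.
Lemma decS e : S e <= red G1 e /\ S e <= blue G2 e.
Proof. split; pf e. Qed.

Lemma dec_bal j : dg dDn j = dg dDp j.
Proof.
case: Hred => _ _ [H1 H2] _ [_ Hall _ _].
have hE := HE j. have h1 := H1 j. have h2 := H2 j.
have hall := congr1 (fun f => dg f j) Hall.
rewrite /bes_all /= !dgD in hall.
have k : munion dDp (munion (blue E) S) = munion (munion (blue G1) (blue G2)) dDn.
  apply: msE => e; rewrite !ffunE; pf e.
have := congr1 (fun f => dg f j) k; rewrite /= !dgD.
move: hE h1 h2 hall; rewrite /dg; lia.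
Qed.

End Dec.
End Comb.

Section Poly.
Variables (K : fieldType) (m : nat) (EH : {set {set 'I_m}}).
Local Open Scope ring_scope.

Definition monof (M : mset EH) : 'X_{1.. nE EH} :=
  [multinom M (enum_val i) | i < nE EH].

Lemma reidx (R : comPzSemiRingType) (F : edge EH -> R) :
  \prod_(i < nE EH) F (enum_val i) = \prod_e F e.
Proof.
rewrite /nE (big_enum_val (A := {: edge EH})) //.
Qed.

Lemma tmonoE (M : mset EH) : Defs.tmono K M = 'X_[monof M].
Proof.
rewrite mpolyXE_id /Defs.tmono -reidx; apply: eq_bigr => i _.
by rewrite /tvar enum_valK mnmE.
Qed.

Lemma reidxN (F : edge EH -> nat) :
  (\sum_(i < nE EH) F (enum_val i) = \sum_e F e)%N.
Proof.
rewrite /nE (big_enum_val (A := {: edge EH})) //.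
Qed.

Lemma mdeg_monof (M : mset EH) : mdeg (monof M) = mcard M.
Proof.
rewrite mdegE /mcard -reidxN.
by apply: eq_bigr => i _; rewrite mnmE.
Qed.


Lemma phiH_tmono (M : mset EH) :
  phiH (Defs.tmono K M) = \prod_(j < m) 'X_j ^+ dg M j.
Proof.
rewrite tmonoE /phiH comp_mpolyX.
under eq_bigr => i _ do rewrite tnth_mktuple mnmE.
rewrite (reidx (fun e => (\prod_(j in val e) 'X_j : {mpoly K[m]}) ^+ M e)).
under eq_bigr => e _ do rewrite -prodrXl big_mkcond /=.
rewrite exchange_big /=; apply: eq_bigr => j _.
rewrite /dg -prodrXr [RHS]big_mkcond /=; apply: eq_bigr => e _.
by case: ifP.
Qed.


Lemma tmonoD (A B : mset EH) :
  Defs.tmono K (munion A B) = Defs.tmono K A * Defs.tmono K B.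
Proof.
rewrite /Defs.tmono -big_split /=; apply: eq_bigr => e _.
by rewrite ffunE exprD.
Qed.

Lemma lincomb_add n p q : lincomb_lowdeg n p -> lincomb_lowdeg n q ->
  @lincomb_lowdeg K m EH n (p + q).
Proof.
move=> [k1 [c1 [b1 [Hb1 ->]]]] [k2 [c2 [b2 [Hb2 ->]]]].
exists (k1 + k2)%N.
exists (fun i => match split i with inl j => c1 j | inr j => c2 j end).
exists (fun i => match split i with inl j => b1 j | inr j => b2 j end).
split.
  by move=> i; case: (split i).
rewrite big_split_ord /=; congr (_ + _); apply: eq_bigr => i _.
  by rewrite (unsplitK (inl _ i)).
by rewrite (unsplitK (inr _ i)).
Qed.

Lemma lincomb_step n (W P Q : mset EH) :
  (forall j, dg P j = dg Q j) -> (maxn (mcard P) (mcard Q) < n)%N ->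
  @lincomb_lowdeg K m EH n (Defs.tmono K (munion W P) - Defs.tmono K (munion W Q)).
Proof.
move=> Hd Hn.
exists 1%N, (fun _ => Defs.tmono K W), (fun _ => Defs.tmono K P - Defs.tmono K Q).
split; last by rewrite big_ord1 !tmonoD mulrBr.
move=> _; exists (monof P), (monof Q).
rewrite !mdeg_monof -!tmonoE; split => //.
rewrite /in_IH /phiH comp_mpolyB.
rewrite -[comp_mpoly _ (Defs.tmono K P)]/(phiH _) -[comp_mpoly _ (Defs.tmono K Q)]/(phiH _).
rewrite !phiH_tmono.
by under eq_bigr => j _ do rewrite Hd; rewrite subrr.
Qed.

End Poly.

Lemma tele4 (V : zmodType) (a0 a1 a2 a3 a4 : V) :
  (a0 - a4 = (a0 - a1) + (a1 - a2) + (a2 - a3) + (a3 - a4))%R.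
Proof. by rewrite !addrA !subrK. Qed.

Lemma tele5 (V : zmodType) (a0 a1 a2 a3 a4 a5 : V) :
  (a0 - a5 = (a0 - a1) + (a1 - a2) + (a2 - a3) + (a3 - a4) + (a4 - a5))%R.
Proof. by rewrite !addrA !subrK. Qed.

Lemma max_lt (a b n : nat) : (a < n)%N -> (b < n)%N -> (maxn a b < n)%N.
Proof. by move=> ha hb; rewrite gtn_max ha hb. Qed.

Theorem proposition5p3 (K : fieldType) (m : nat) (EH : {set {set 'I_m}})
  (Hne : set0 \notin EH) (E : bes EH) (n : nat)
  (Hbal : balanced E) (Hn : mcard (blue E) = n) (Hnr : (mcard (red E) <= n)%N) :
  ((exists (S : mset EH) (G1 G2 : bes EH),
      [/\ splitting E G1 S G2, proper_sep G1 S G2,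
          (mcard (blue G1) < n)%N /\ (mcard (red G1) < n)%N
        & (mcard (blue G2) < n)%N /\ (mcard (red G2) < n)%N])
   \/
   (exists (S R : mset EH) (G1 G2 U1 U2 : bes EH),
      [/\ splitting E G1 S G2 /\ blue_sep G1 S G2,
          splitting E U1 R U2 /\ red_sep U1 R U2,
          (mcard S < n)%N /\ (mcard R < n)%N
        & [/\ (mcard (blue G1) < n)%N, (mcard (red U2) < n)%N,
              (mcard (blue G2) <= n)%N, (mcard (red U1) <= n)%N
            & ~~ mempty (mcap S R)]])) ->
  @lincomb_lowdeg K m EH n (@fbin K m EH E).
Proof.
case.
  move=> [S [G1 [G2 [[_ Hred] _ [hb1 hr1] [hb2 hr2]]]]].
  have [_ _ [H1 H2] _ _] := Hred.
  rewrite /fbin (dec1 Hred) -(dec5 Hred).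
  rewrite (tele4 _ (Defs.tmono K (munion (dM E G1 G2 S) (dDp E G1 G2 S)))
     (Defs.tmono K (munion (dB G2 S) (red G1)))
     (Defs.tmono K (munion (dA G1 S) (red G2)))).
  apply: lincomb_add; [apply: lincomb_add; [apply: lincomb_add|]|].
  - apply: lincomb_step; first exact: dec_bal Hbal Hred.
    apply: max_lt.
      by apply: leq_ltn_trans hr1; apply: mcard_le => e; case: (decb Hred e).
    by apply: leq_ltn_trans hb1; apply: mcard_le => e; case: (decb Hred e).
  - rewrite (dec2 Hred); apply: lincomb_step; first exact: H1.
    exact: max_lt.
  - rewrite (dec3 Hred); apply: lincomb_step; first exact: H2.
    exact: max_lt.
  - rewrite (dec4 Hred); apply: lincomb_step; first exact: dec_bal Hbal Hred.
    apply: max_lt.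
      by apply: leq_ltn_trans hr1; apply: mcard_le => e; case: (decb Hred e).
    by apply: leq_ltn_trans hb1; apply: mcard_le => e; case: (decb Hred e).
move=> [S [R [G1 [G2 [U1 [U2 [[[_ Hred] [_ HbS]] [[_ HredU] [_ HrR]]
   [hS hR] [hb1 hru2 hb2 hru1 hc]]]]]]]].
have [_ _ [H1 H2] _ _] := Hred.
have [_ _ [HU1 HU2] _ _] := HredU.
set c := mcap S R.
set P : mset EH := [ffun e => dA G1 S e + blue G2 e - c e].
set Q : mset EH := [ffun e => dB U2 R e + red U1 e - c e].
have kP : munion (dA G1 S) (blue G2) = munion c P.
  apply: msE => e; rewrite !ffunE; case: (decS Hred e); lia.
have kQ : munion (dB U2 R) (red U1) = munion c Q.
  apply: msE => e; rewrite !ffunE; case: (decS HredU e); lia.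
have zA : mcard (dA G1 S) = 0%N.
  by rewrite /mcard big1 // => e _; rewrite ffunE HbS subnn.
have zB : mcard (dB U2 R) = 0%N.
  by rewrite /mcard big1 // => e _; rewrite ffunE HrR subnn.
have c0 : (0 < mcard c)%N := mcard_gt0 hc.
have hr1 : (mcard (red G1) < n)%N by rewrite HbS.
have hu2 : (mcard (blue U2) < n)%N by rewrite HrR.
rewrite /fbin (dec1 Hred) -(dec5 HredU).
rewrite (tele5 _ (Defs.tmono K (munion (dM E G1 G2 S) (dDp E G1 G2 S)))
     (Defs.tmono K (munion (dB G2 S) (red G1)))
     (Defs.tmono K (munion (dB U2 R) (red U1)))
     (Defs.tmono K (munion (dA U1 R) (red U2)))).
apply: lincomb_add; [apply: lincomb_add; [apply: lincomb_add;
   [apply: lincomb_add|]|]|].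
- apply: lincomb_step; first exact: dec_bal Hbal Hred.
  apply: max_lt.
    apply: leq_ltn_trans hr1.
    by apply: mcard_le => e; case: (decb Hred e).
  by apply: leq_ltn_trans hb1; apply: mcard_le => e; case: (decb Hred e).
- rewrite (dec2 Hred); apply: lincomb_step; first exact: H1.
  by apply: max_lt => //; rewrite HbS.
- rewrite (dec3 Hred) kP kQ; apply: lincomb_step.
    move=> j.
    have a1 := congr1 (fun f => dg f j) kP.
    have a2 := congr1 (fun f => dg f j) kQ.
    have a3 := congr1 (fun f => dg f j) (dec4 Hred).
    have a4 := congr1 (fun f => dg f j) (dec5 Hred).
    have a5 := congr1 (fun f => dg f j) (dec2 HredU).
    have a6 := congr1 (fun f => dg f j) (dec1 HredU).
    have b1 := dec_bal Hbal Hred j. have b2 := dec_bal Hbal HredU j.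
    have h2 := H2 j. have u1 := HU1 j. have e0 := Hbal j.
    move: a1 a2 a3 a4 a5 a6; rewrite /= !dgD.
    move: b1 b2 h2 u1 e0; rewrite /dg; lia.
  have m1 := congr1 (fun f => mcard f) kP; have m2 := congr1 (fun f => mcard f) kQ.
  move: m1 m2; rewrite !mcardD zA zB => m1 m2.
  apply: max_lt; lia.
- rewrite (dec3 HredU); apply: lincomb_step; first exact: HU2.
  by apply: max_lt => //; rewrite HrR.
- rewrite (dec4 HredU); apply: lincomb_step; first exact: dec_bal Hbal HredU.
  apply: max_lt.
    by apply: leq_ltn_trans hru2; apply: mcard_le => e; case: (decb HredU e).
  apply: leq_ltn_trans hu2.
  by apply: mcard_le => e; case: (decb HredU e).
Qed.
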